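(* Let $X$ be a strongly $QI_2$-continuous $T_0$ space. Then $GSI_2$-convergence in $X$ is topological.
   Context: For a $T_0$ space $X$, the specialization order is $x\le y$ iff $x\in \mathrm{cl}\{y\}$; $\uparrow A=\{x: a\le x\text{ for some } a\in A\}$, $\uparrow x=\uparrow\{x\}$; $A^\uparrow$, $A^\downarrow$ are the sets of upper and lower bounds of $A$, and $A^\delta=(A^\uparrow)^\downarrow$. A nonempty subset $A$ of a space is irreducible if whenever $A\subseteq F_1\cup F_2$ with $F_1,F_2$ closed, $A\subseteq F_1$ or $A\subseteq F_2$. $X^{(<\omega)}$ is the set of nonempty finite subsets of $X$. $P_S(X)$ is the set of nonempty compact saturated (upper) subsets of $X$ with the upper Vietoris topology, basis $\{\square U: U\text{ open}\}$, $\square U=\{Q: Q\subseteq U\}$. A net is eventually in $U$ if from some index on all its terms lie in $U$; it converges to $x$ in a topology if it is eventually in every open set containing $x$. $U\subseteq X$ is $SI_2$-open if $U$ is open and for every irreducible $F\subseteq X$, $F^\delta\cap U\ne\emptyset$ implies $F\cap U\neq\emptyset$. A net $(x_i)_{i\in I}$ $GSI_2$-converges to $x$ if there exists $\mathcal F\subseteq X^{(<\omega)}$ with $\{\uparrow G: G\in\mathcal F\}$ irreducible in $P_S(X)$ such that (i) for every open $U$, if $\uparrow G\subseteq U$ for some $G\in\mathcal F$ then $x_i\in U$ eventually, and (ii) $\bigcap_{G\in\mathcal F}\uparrow G\subseteq\uparrow x$. Let $\mathcal{O}(\mathcal{GSI}_2(X))$ be the topology of all $U\subseteq X$ such that every net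 $GSI_2$-converging to a point of $U$ is eventually in $U$. $GSI_2$-convergence in $X$ is topological if for every net and point, the net $GSI_2$-converges to the point iff it converges to it in the topology $\mathcal{O}(\mathcal{GSI}_2(X))$. For $A\subseteq X$, $x\in X$, $A\ll_{I_2}x$ means: for every irreducible $D\subseteq X$ with $x\in D^\delta$, $A\cap\mathrm{cl}D\ne\emptyset$. For $x\in X$, $w(x)=\{\uparrow F: F\in X^{(<\omega)}, F\ll_{I_2}x\}$. $X$ is $QI_2$-continuous if for every $x\in X$, $w(x)$ is irreducible in $P_S(X)$ and $\uparrow x=\bigcap w(x)$. $X$ is strongly $QI_2$-continuous if it is $QI_2$-continuous and for every $F\in X^{(<\omega)}$, $x\in X$ with $F\ll_{I_2}x$, and every open $U$ with $F\subseteq U$, there is an $SI_2$-open set $W$ with $x\in W\subseteq U$. *)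

(* Defs.v *)
From HB Require Import structures.
From mathcomp Require Import all_boot all_order.
From mathcomp Require Import boolp classical_sets functions cardinality topology.
Set Implicit Arguments. Unset Strict Implicit. Unset Printing Implicit Defensive.
Local Open Scope classical_set_scope.

Definition directed (I : Type) (le : I -> I -> Prop) :=
  [/\ exists i : I, True,
      (forall i, le i i),
      (forall i j k, le i j -> le j k -> le i k)
    & (forall i j, exists k, le i k /\ le j k)].

Record net (T : Type) := Net {
  net_idx : Type;
  net_le : net_idx -> net_idx -> Prop;
  net_directed : directed net_le;
  net_val : net_idx -> T }.
Arguments net_idx {T} _.
Arguments net_le {T} _ _ _.
Arguments net_val {T} _ _.

Definition eventually_in (T : Type) (N : net T) (A : set T) :=
  exists i0, forall i, net_le N i0 i -> A (net_val N i).

Definition conv_in (T : Type) (opn : set (set T)) (N : net T) (x : T) :=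
  forall U, opn U -> U x -> eventually_in N U.

Section Defs.
Variable X : topologicalType.

Definition spec_le (x y : X) := closure [set y] x.
Definition up (A : set X) := [set x | exists2 a, A a & spec_le a x].
Definition upper_bounds (A : set X) := [set y | forall a, A a -> spec_le a y].
Definition lower_bounds (A : set X) := [set y | forall a, A a -> spec_le y a].
Definition delta (A : set X) := lower_bounds (upper_bounds A).

Definition irreducible (A : set X) :=
  A !=set0 /\ forall F1 F2 : set X, closed F1 -> closed F2 ->
    A `<=` F1 `|` F2 -> A `<=` F1 \/ A `<=` F2.

Definition fin_ne (F : set X) := finite_set F /\ F !=set0.

Definition PS (Q : set X) := [/\ Q !=set0, compact Q & up Q `<=` Q].
Definition box (U : set X) := [set Q | PS Q /\ Q `<=` U].

(** upper Vietoris topology on P_S(X), generated by the basis {box U : U open} *)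
Definition PS_open (O : set (set X)) :=
  O `<=` PS /\ forall Q, O Q -> exists U, [/\ open U, Q `<=` U & box U `<=` O].
Definition PS_closed (C : set (set X)) := C `<=` PS /\ PS_open (PS `\` C).
Definition PS_irreducible (A : set (set X)) :=
  [/\ A `<=` PS, A !=set0 &
    forall C1 C2, PS_closed C1 -> PS_closed C2 ->
      A `<=` C1 `|` C2 -> A `<=` C1 \/ A `<=` C2].

Definition SI2_open (U : set X) :=
  open U /\ forall F, irreducible F -> delta F `&` U !=set0 -> F `&` U !=set0.

Definition GSI2_conv (N : net X) (x : X) :=
  exists FF : set (set X),
    [/\ (forall G, FF G -> fin_ne G),
        PS_irreducible [set up G | G in FF],
        (forall U, open U -> (exists2 G, FF G & up G `<=` U) -> eventually_in N U)
      & \bigcap_(G in FF) up G `<=` up [set x]].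

Definition GSI2_open (U : set X) :=
  forall (N : net X) x, U x -> GSI2_conv N x -> eventually_in N U.

Definition GSI2_topological :=
  forall (N : net X) x, GSI2_conv N x <-> conv_in GSI2_open N x.

Definition ll_I2 (A : set X) (x : X) :=
  forall D, irreducible D -> delta D x -> A `&` closure D !=set0.

Definition w (x : X) := [set up F | F in [set F | fin_ne F /\ ll_I2 F x]].

Definition QI2_continuous :=
  forall x, PS_irreducible (w x) /\ up [set x] = \bigcap_(Q in w x) Q.

Definition strongly_QI2_continuous :=
  QI2_continuous /\
  forall F x, fin_ne F -> ll_I2 F x -> forall U, open U -> F `<=` U ->
    exists W, [/\ SI2_open W, W x & W `<=` U].

End Defs.

(* Main.v *)
Require Import Defs.
From mathcomp Require Import all_boot all_order.
From mathcomp Require Import boolp classical_sets functions cardinality topology.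

Set Implicit Arguments. Unset Strict Implicit. Unset Printing Implicit Defensive.
Local Open Scope classical_set_scope.

Section Aux.
Variable X : topologicalType.

Lemma spec_trans (a b c : X) : spec_le a b -> spec_le b c -> spec_le a c.
Proof.
move=> ab bc; apply: (@closed_closure _ [set c]).
apply: (closureS (B := closure [set c])) ab.
by move=> _ ->.
Qed.

Lemma rudin (AA : set (set X)) (C : set X) :
  PS_irreducible AA -> closed C -> (forall K, AA K -> K `&` C !=set0) ->
  exists A, [/\ irreducible A, A `<=` C & forall K, AA K -> K `&` A !=set0].
Proof.
move=> [AAPS [K0 AAK0] AAirr] Ccl KC.
pose P := [set O : set X | open O /\ forall K, AA K -> K `&` (C `&` ~` O) !=set0].
have [O [[Oop OK] Omax]] : exists O, P O /\ forall B, O `<` B -> ~ P B.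
  apply: Zorn_bigcup => F FP Ftot; split.
    by apply: bigcup_open => i /FP [].
  move=> K AAK.
  have [[O1 FO1]|F0] := pselect (F !=set0); last first.
    have -> : \bigcup_(X0 in F) X0 = set0.
      by apply/seteqP; split => // x [O FO _]; apply: F0; exists O.
    by rewrite setC0 setIT; apply: KC.
  have [_ Kcpt _] := AAPS _ AAK.
  pose B := fun O => K `&` (C `&` ~` O).
  have Ffil : Filter (filter_from F B).
    apply: filter_from_filter; first by exists O1.
    move=> i j Fi Fj; have [ij|ji] := Ftot _ _ Fi Fj.
      exists j => // x [Kx [Cx njx]]; split; split => //; split => //.
      by move=> /ij.
    exists i => // x [Kx [Cx nix]]; split; split => //; split => //.
    by move=> /ji.
  have Fpr : ProperFilter (filter_from F B).
    by apply: filter_from_proper => // i /FP [_ /(_ K AAK)].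
  have FK : filter_from F B K by exists O1 => // x [].
  have [p [Kp clp]] := Kcpt _ Fpr FK.
  exists p; split => //; split.
    apply: contrapT => nCp.
    have h : filter_from F B (B O1) by exists O1.
    have [] := clp (B O1) (~` C) h.
      by apply: open_nbhs_nbhs; split => //; exact: closed_openC.
    by move=> x [[_ [Cx _]] nCx].
  move=> [O FO Op].
  have h : filter_from F B (B O) by exists O.
  have [] := clp (B O) O h.
    by apply: open_nbhs_nbhs; split => //; exact: (FP _ FO).1.
  by move=> x [[_ [_ nOx]] Ox].
have Acl : closed (C `&` ~` O) by apply: closedI => //; rewrite closedC.
have Amin : forall B, closed B -> B `<=` C `&` ~` O ->
    (forall K, AA K -> K `&` B !=set0) -> C `&` ~` O `<=` B.
  move=> B Bcl BA BK x Ax; apply: contrapT => nBx.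
  apply: (Omax (~` B)).
    split.
      by move=> y Oy By; have [_ ] := BA _ By; apply.
    by move=> /(_ x nBx); case: Ax.
  split; first by rewrite openC.
  move=> K AAK; have [y [Ky By]] := BK K AAK; exists y; split => //; split.
    exact: (BA _ By).1.
  by move=> nB; apply: nB.
exists (C `&` ~` O); split; last 2 first.
- by move=> x [].
- exact: OK.
split.
  by have [x [_ Ax]] := OK _ AAK0; exists x.
move=> F1 F2 F1cl F2cl AF.
pose D i := [set Q : set X | PS Q /\ Q `&` (C `&` ~` O `&` i) !=set0].
have Dcl : forall Fi, closed Fi -> PS_closed (D Fi).
  move=> Fi Ficl; split; first by move=> Q [].
  split; first by move=> Q [].
  move=> Q [PSQ nDQ]; exists (~` (C `&` ~` O `&` Fi)); split.
  - by rewrite openC; apply: closedI.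
  - by move=> q Qq Aq; apply: nDQ; split => //; exists q.
  - move=> Q' [PSQ' Q'U]; split => //.
    by move=> [_ [q [Q'q Aq]]]; exact: Q'U _ Q'q Aq.
have AAD : AA `<=` D F1 `|` D F2.
  move=> K AAK; have [a [Ka Aa]] := OK _ AAK.
  have [F1a|F2a] := AF _ Aa; [left|right]; (split; first exact: AAPS);
    by exists a.
have [AAD1|AAD2] := AAirr _ _ (Dcl _ F1cl) (Dcl _ F2cl) AAD; [left|right].
  move=> a Aa; by case: (Amin (C `&` ~` O `&` F1) (closedI Acl F1cl)
    (fun y => @proj1 _ _) (fun K h => (AAD1 K h).2) a Aa).
move=> a Aa; by case: (Amin (C `&` ~` O `&` F2) (closedI Acl F2cl)
  (fun y => @proj1 _ _) (fun K h => (AAD2 K h).2) a Aa).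
Qed.

Lemma SI2_GSI2 (W : set X) : SI2_open W -> GSI2_open W.
Proof.
move=> [Wop WSI] N y Wy [FF [FFfin FFirr FFev FFcap]].
have [[G FFG GW]|nG] := pselect (exists2 G, FF G & up G `<=` W).
  by apply: FFev => //; exists G.
have Ccl : closed (~` W) by rewrite closedC.
have KC : forall K, [set up G | G in FF] K -> K `&` ~` W !=set0.
  move=> _ [G FFG <-]; apply: contrapT => h; apply: nG; exists G => //.
  by move=> z Gz; apply: contrapT => nWz; apply: h; exists z.
have [A [Airr AC AK]] := rudin FFirr Ccl KC.
have : delta A `&` W !=set0.
  exists y; split => //.
  move=> u uub.
  have : up [set y] u.
    apply: FFcap => G FFG.
    have [a [[g Gg ga] Aa]] := AK _ (ex_intro2 _ _ G FFG erefl).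
    by exists g => //; exact: spec_trans ga (uub _ Aa).
  by case=> _ ->.
by case/(WSI _ Airr) => a [Aa Wa]; by case: (AC _ Aa Wa).
Qed.

End Aux.

Theorem proposition4p11 (X : topologicalType) :
  kolmogorov_space X -> strongly_QI2_continuous X -> GSI2_topological X.
Proof.
move=> _ [QI strong] N x; split.
  by move=> H U GU Ux; exact: GU Ux H.
move=> conv; exists [set F | fin_ne F /\ ll_I2 F x]; split.
- by move=> G [].
- exact: (QI x).1.
- move=> U Uop [G [Gfin Gll] GU].
  have GU' : G `<=` U.
    by move=> g Gg; apply: GU; exists g => //; exact: subset_closure.
  have [W [WSI Wx WU]] := strong G x Gfin Gll U Uop GU'.
  have [i0 Hi] := conv W (SI2_GSI2 WSI) Wx.
  by exists i0 => i /Hi; exact: WU.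
- move=> z Hz; rewrite (QI x).2 => Q [G HG <-]; exact: Hz.
Qed.
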